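(* Let $\phi=\tilde p/p$ be an irreducible rational inner function on $\mathbb{D}^3$ of degree $(m,n,1)$ with $p(z)=p_1(z_1,z_2)+z_3p_2(z_1,z_2)$, $\tilde p(z)=z_3\tilde p_1(z_1,z_2)+\tilde p_2(z_1,z_2)$. Assume $\tau=(\tau_1,\tau_2,\tau_3)\in\mathcal{Z}_p\cap\mathbb{T}^3$ and that the vertical line $\{(\tau_1,\tau_2)\}\times\mathbb{T}$ is not a component of $\mathcal{Z}_p$. Then $\phi^*(\tau)=\frac{\tilde p_2(\tau_1,\tau_2)}{p_1(\tau_1,\tau_2)}$, where $\phi^*(\tau)$ denotes the nontangential limit of $\phi$ at $\tau$.
   Context: A rational inner function (RIF) on $\mathbb{D}^3$ is a rational function holomorphic on the tridisk with unimodular radial limits a.e. on $\mathbb{T}^3$; it is written $\phi=\tilde p/p$ with $p$ zero-free on $\mathbb{D}^3$, $p,\tilde p$ without common factors. For degree $(m,n,1)$, $\tilde p(z)=z_1^mz_2^nz_3\overline{p(1/\bar z_1,1/\bar z_2,1/\bar z_3)}$ and $\tilde p_j(z_1,z_2)=z_1^mz_2^n\overline{p_j(1/\bar z_1,1/\bar z_2)}$. The nontangential limit at $\tau\in\mathbb{T}^3$ is the limit as $z\to\tau$ in $\mathbb{D}^3$ with $\|z-\tau\|\le C(1-\|z\|)$; it exists at every $\tau\in\mathbb{T}^3$ for every RIF. $\mathcal{Z}_p$ is the zero set of $p$. *)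

(* Defs.v *)
From HB Require Import structures.
From mathcomp Require Import all_boot all_order all_algebra.
From mathcomp Require Import complex.
From mathcomp Require Import reals.
Set Implicit Arguments. Unset Strict Implicit. Unset Printing Implicit Defensive.
Import Order.TTheory GRing.Theory Num.Theory.
Local Open Scope ring_scope.

(* Bivariate polynomials in (z1,z2): {poly {poly C}}, the OUTER variable is z2
   and the inner one (coefficients) is z1.
   Trivariate polynomials in (z1,z2,z3): {poly {poly {poly C}}}, outer variable
   z3, coefficients bivariate in (z1,z2) as above. *)

Section Defs.
Variable R : realType.
Local Notation C := (R[i]).

Definition ev2 (P : {poly {poly C}}) (z1 z2 : C) : C :=
  (map_poly (fun q : {poly C} => q.[z1]) P).[z2].

Definition ev3 (P : {poly {poly {poly C}}}) (z1 z2 z3 : C) : C :=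
  (map_poly (fun Q : {poly {poly C}} => ev2 Q z1 z2) P).[z3].

Definition deg2_le (m n : nat) (P : {poly {poly C}}) : Prop :=
  (size P <= n.+1)%N /\ forall j, (size (nth 0%R P j) <= m.+1)%N.

Definition deg3_le (m n k : nat) (P : {poly {poly {poly C}}}) : Prop :=
  (size P <= k.+1)%N /\ forall l, deg2_le m n (P`_l).

(* reflection  P~(z1,z2) = z1^m z2^n conj(P(1/conj z1, 1/conj z2)),
   written out on coefficients (coefficient of z1^i z2^j is
   conj of the coefficient of z1^(m-i) z2^(n-j)). *)
Definition refl2 (m n : nat) (P : {poly {poly C}}) : {poly {poly C}} :=
  \poly_(j < n.+1) \poly_(i < m.+1) ((P`_(n - j))`_(m - i))^*%C.

(* reflection  P~(z) = z1^m z2^n z3^k conj(P(1/conj z1,1/conj z2,1/conj z3)) *)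
Definition refl3 (m n k : nat) (P : {poly {poly {poly C}}})
  : {poly {poly {poly C}}} :=
  \poly_(l < k.+1) \poly_(j < n.+1) \poly_(i < m.+1)
     (((P`_(k - l))`_(n - j))`_(m - i))^*%C.

Definition zero_free_D3 (P : {poly {poly {poly C}}}) : Prop :=
  forall z1 z2 z3 : C, `|z1| < 1 -> `|z2| < 1 -> `|z3| < 1 ->
    ev3 P z1 z2 z3 != 0.

Definition common_factor (P Q : {poly {poly {poly C}}}) : Prop :=
  exists D A B : {poly {poly {poly C}}},
    D \isn't a GRing.unit /\ P = D * A /\ Q = D * B.

Definition irreducible3 (P : {poly {poly {poly C}}}) : Prop :=
  P != 0 /\ P \isn't a GRing.unit /\
  forall A B : {poly {poly {poly C}}}, P = A * B ->
    A \is a GRing.unit \/ B \is a GRing.unit.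

(* nontangential limit of f : D^3 -> C at tau in T^3, w.r.t. the max norm
   ||z|| = max_i |z_i|:  for every aperture c > 0, f z -> L as z -> tau
   inside D^3 with ||z - tau|| <= c (1 - ||z||). *)
Definition nt_limit (f : C -> C -> C -> C) (t1 t2 t3 L : C) : Prop :=
  forall c : C, 0 < c -> forall eps : C, 0 < eps ->
  exists delta : C, 0 < delta /\
  forall z1 z2 z3 : C,
    `|z1| < 1 -> `|z2| < 1 -> `|z3| < 1 ->
    (let d := [:: `|z1 - t1|; `|z2 - t2|; `|z3 - t3|] in
     let nz := [:: `|z1|; `|z2|; `|z3|] in
     (forall a b, a \in d -> b \in nz -> a <= c * (1 - b)) ->
     (forall a, a \in d -> a < delta) ->
     `|f z1 z2 z3 - L| < eps).

End Defs.

(* Main.v *)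
Require Import Defs.
From HB Require Import structures.
From mathcomp Require Import all_boot all_order all_algebra.
From mathcomp Require Import complex.
From mathcomp Require Import reals.
From mathcomp Require Import ring lra.
Set Implicit Arguments. Unset Strict Implicit. Unset Printing Implicit Defensive.
Import Order.TTheory GRing.Theory Num.Theory.
Local Open Scope ring_scope.
Local Open Scope complex_scope.

Section NM.
Variable R : realType.
Local Notation C := (R[i]).

Definition nm (x : C) : R := complex.Re `|x|.

Lemma normE (x : C) : `|x| = (nm x)%:C.
Proof. by rewrite /nm normc_def. Qed.

Lemma nm_ge0 x : 0 <= nm x.
Proof. by have := normr_ge0 x; rewrite normE -[0 : C](rmorph0 (real_complex R)) lecR. Qed.

Lemma nmD x y : nm (x + y) <= nm x + nm y.
Proof. by rewrite -lecR rmorphD /= -!normE ler_normD. Qed.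

Lemma nmM x y : nm (x * y) = nm x * nm y.
Proof. by apply: complexI; rewrite rmorphM /= -!normE normrM. Qed.


Lemma nmN x : nm (- x) = nm x.
Proof. by rewrite /nm normrN. Qed.

Lemma nmB x y : nm (x - y) = nm (y - x).
Proof. by rewrite /nm distrC. Qed.

Lemma nmJ x : nm (x^*%C) = nm x.
Proof. by rewrite /nm normcJ. Qed.

Lemma nmX x k : nm (x ^+ k) = nm x ^+ k.
Proof. by apply: complexI; rewrite rmorphXn /= -!normE normrX. Qed.

Lemma nm0 : nm 0 = 0.
Proof. by rewrite /nm normr0. Qed.

Lemma nm1 : nm 1 = 1.
Proof. by rewrite /nm normr1. Qed.

Lemma nmV x : nm (x^-1) = (nm x)^-1.
Proof.
have [->|x0] := eqVneq x 0; first by rewrite invr0 nm0 invr0.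
have h : nm x * nm x^-1 = 1 by rewrite -nmM mulfV // nm1.
have nx : nm x != 0 by apply/eqP => e; move: h; rewrite e mul0r => /eqP; rewrite eq_sym oner_eq0.
by rewrite -[LHS]mul1r -(mulVf nx) -mulrA h mulr1.
Qed.

Lemma nm_eq0 x : (nm x == 0) = (x == 0).
Proof. by rewrite -[x == 0]normr_eq0 normE -[0 : C](rmorph0 (real_complex R)) (inj_eq (@complexI R)). Qed.

Lemma nm_lt1 x : (`|x| < 1) = (nm x < 1).
Proof. by rewrite normE -[1 : C](rmorph1 (real_complex R)) ltcR. Qed.

Lemma nm_eq1 x : (`|x| = 1) <-> (nm x = 1).
Proof. by rewrite normE; split => [[]|->]. Qed.

Lemma nm_real (k : R) : nm k%:C = `|k|.
Proof. by rewrite /nm normc_def /= expr0n addr0 sqrtr_sqr. Qed.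

Lemma Re_le_nm x : complex.Re x <= nm x.
Proof.
have := normc_ge_Re x; rewrite normE lecR => H.
exact: le_trans (ler_norm _) H.
Qed.

Lemma Re_ge_nm x : - nm x <= complex.Re x.
Proof.
have := normc_ge_Re x; rewrite normE lecR => H.
by rewrite lerNl; apply: le_trans H; rewrite -normrN ler_norm.
Qed.

Lemma Im_le_nm x : `|complex.Im x| <= nm x.
Proof. by case: x => a b; rewrite /nm normc_def /= -sqrtr_sqr ler_wsqrtr // lerDr sqr_ge0. Qed.

End NM.

Section Diff.
Variable R : realType.
Local Notation C := (R[i]).
Local Notation nm := (@nm R).

Definition Diff (f : C -> C -> C) (t1 t2 : C) := exists d1 d2 : C, exists K : R,
  0 <= K /\ forall h1 h2, nm h1 <= 1 -> nm h2 <= 1 ->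
  nm (f (t1+h1) (t2+h2) - f t1 t2 - (d1*h1 + d2*h2)) <= K * (nm h1 + nm h2)^+2.

Lemma nm_lin (d1 d2 h1 h2 : C) : nm (d1*h1 + d2*h2) <= (nm d1 + nm d2) * (nm h1 + nm h2).
Proof.
apply: le_trans (nmD _ _) _; rewrite !nmM.
have := nm_ge0 d1; have := nm_ge0 d2; have := nm_ge0 h1; have := nm_ge0 h2. nra.
Qed.

Lemma Diff_lip f t1 t2 : Diff f t1 t2 -> exists A : R, 0 <= A /\
  forall h1 h2, nm h1 <= 1 -> nm h2 <= 1 ->
  nm (f (t1+h1) (t2+h2) - f t1 t2) <= A * (nm h1 + nm h2).
Proof.
move=> [d1 [d2 [K [K0 H]]]]; exists (nm d1 + nm d2 + 2 * K); split.
  by have := nm_ge0 d1; have := nm_ge0 d2; lra.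
move=> h1 h2 n1 n2; have := H h1 h2 n1 n2.
set r := (X in nm X).
have -> : f (t1 + h1) (t2 + h2) - f t1 t2 = r + (d1 * h1 + d2 * h2) by rewrite /r; ring.
move=> Hr; apply: le_trans (nmD _ _) _; have := nm_lin d1 d2 h1 h2.
have := nm_ge0 h1; have := nm_ge0 h2; have := nm_ge0 d1; have := nm_ge0 d2.
move: Hr; set s := nm h1 + nm h2 => Hr *.
have s2 : s <= 2 by rewrite /s; lra.
have s0 : 0 <= s by rewrite /s; lra.
have : K * s ^+ 2 <= 2 * K * s by rewrite expr2; have := mulr_ge0 K0 s0; nra.
nra.
Qed.

Lemma Diff_const (k : C) t1 t2 : Diff (fun _ _ => k) t1 t2.
Proof.
exists 0, 0, 0; split => // h1 h2 _ _.
have -> : k - k - (0 * h1 + 0 * h2) = 0 by ring.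
by rewrite nm0 mul0r.
Qed.

Lemma Diff_p1 t1 t2 : Diff (fun z1 _ => z1) t1 t2.
Proof.
exists 1, 0, 0; split => // h1 h2 _ _.
have -> : t1 + h1 - t1 - (1 * h1 + 0 * h2) = 0 by ring.
by rewrite nm0 mul0r.
Qed.

Lemma Diff_p2 t1 t2 : Diff (fun _ z2 => z2) t1 t2.
Proof.
exists 0, 1, 0; split => // h1 h2 _ _.
have -> : t2 + h2 - t2 - (0 * h1 + 1 * h2) = 0 by ring.
by rewrite nm0 mul0r.
Qed.

Lemma Diff_add f g t1 t2 : Diff f t1 t2 -> Diff g t1 t2 ->
  Diff (fun z1 z2 => f z1 z2 + g z1 z2) t1 t2.
Proof.
move=> [d1 [d2 [K [K0 H]]]] [e1 [e2 [L [L0 G]]]].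
exists (d1 + e1), (d2 + e2), (K + L); split; first lra.
move=> h1 h2 n1 n2; have := H h1 h2 n1 n2; have := G h1 h2 n1 n2.
set x := (X in nm X <= K * _); set y := (X in nm X <= L * _) => Hy Hx.
have -> : f (t1 + h1) (t2 + h2) + g (t1 + h1) (t2 + h2) - (f t1 t2 + g t1 t2) -
  ((d1 + e1) * h1 + (d2 + e2) * h2) = x + y by rewrite /x /y; ring.
apply: le_trans (nmD _ _) _; lra.
Qed.

Lemma Diff_mul f g t1 t2 : Diff f t1 t2 -> Diff g t1 t2 ->
  Diff (fun z1 z2 => f z1 z2 * g z1 z2) t1 t2.
Proof.
move=> Df Dg.
have [Af [Af0 HAf]] := Diff_lip Df; have [Ag [Ag0 HAg]] := Diff_lip Dg.
move: Df Dg => [d1 [d2 [K [K0 H]]]] [e1 [e2 [L [L0 G]]]].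
exists (f t1 t2 * e1 + g t1 t2 * d1), (f t1 t2 * e2 + g t1 t2 * d2),
  (Af * Ag + nm (f t1 t2) * L + nm (g t1 t2) * K); split.
  by have := nm_ge0 (f t1 t2); have := nm_ge0 (g t1 t2); nra.
move=> h1 h2 n1 n2; have := H h1 h2 n1 n2; have := G h1 h2 n1 n2.
have := HAf h1 h2 n1 n2; have := HAg h1 h2 n1 n2.
set F := f (t1 + h1) (t2 + h2); set G' := g (t1 + h1) (t2 + h2).
set f0 := f t1 t2; set g0 := g t1 t2.
set x := (X in nm X <= K * _); set y := (X in nm X <= L * _) => HG HF Hy Hx.
have -> : F * G' - f0 * g0 - ((f0 * e1 + g0 * d1) * h1 + (f0 * e2 + g0 * d2) * h2)
  = (F - f0) * (G' - g0) + (f0 * y + g0 * x) by rewrite /x /y; ring.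
apply: le_trans (nmD _ _) _; rewrite nmM.
apply: le_trans (lerD (lexx _) (nmD _ _)) _; rewrite !nmM.
have := nm_ge0 f0; have := nm_ge0 g0; have := nm_ge0 (F - f0); have := nm_ge0 (G' - g0).
move: HG HF Hy Hx; set s := nm h1 + nm h2 => HG HF Hy Hx.
have s0 : 0 <= s by rewrite /s; have := nm_ge0 h1; have := nm_ge0 h2; lra.
rewrite expr2 in Hy Hx *.
nra.
Qed.

End Diff.

Section Ev.
Variable R : realType.
Local Notation C := (R[i]).
Local Notation nm := (@nm R).

Lemma Diff_ext (f g : C -> C -> C) t1 t2 : (forall z1 z2, f z1 z2 = g z1 z2) ->
  Diff f t1 t2 -> Diff g t1 t2.
Proof.
move=> e [d1 [d2 [K [K0 H]]]]; exists d1, d2, K; split => // h1 h2 n1 n2.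
by rewrite -!e; apply: H.
Qed.

Lemma ev2E (P : {poly {poly C}}) z1 z2 :
  ev2 P z1 z2 = (map_poly (horner_eval z1) P).[z2].
Proof. by []. Qed.

Lemma ev2_step (Q : {poly {poly C}}) (c : {poly C}) z1 z2 :
  ev2 (Q * 'X + c%:P) z1 z2 = ev2 Q z1 z2 * z2 + c.[z1].
Proof.
rewrite !ev2E rmorphD rmorphM /= map_polyX map_polyC hornerD hornerMX hornerC /=.
by [].
Qed.

Lemma Diff_poly1 (c : {poly C}) t1 t2 : Diff (fun z1 _ => c.[z1]) t1 t2.
Proof.
elim/poly_ind: c => [|c k IH].
  apply: Diff_ext (Diff_const 0 t1 t2) => z1 z2; by rewrite horner0.
apply: Diff_ext (Diff_add (Diff_mul IH (Diff_p1 t1 t2)) (Diff_const k t1 t2)) => z1 z2.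
by rewrite hornerMXaddC.
Qed.

Lemma DiffP (P : {poly {poly C}}) t1 t2 : Diff (ev2 P) t1 t2.
Proof.
elim/poly_ind: P => [|Q c IH].
  apply: Diff_ext (Diff_const 0 t1 t2) => z1 z2; by rewrite ev2E rmorph0 horner0.
apply: Diff_ext (Diff_add (Diff_mul IH (Diff_p2 t1 t2)) (Diff_poly1 c t1 t2)) => z1 z2.
by rewrite ev2_step.
Qed.

End Ev.

Section Ev3.
Variable R : realType.
Local Notation C := (R[i]).
Local Notation nm := (@nm R).

Lemma ev2_0 z1 z2 : ev2 (0 : {poly {poly C}}) z1 z2 = 0.
Proof. by rewrite ev2E rmorph0 horner0. Qed.

Lemma ev3_lin (P : {poly {poly {poly C}}}) z1 z2 z3 : (size P <= 2)%N ->
  ev3 P z1 z2 z3 = ev2 P`_0 z1 z2 + ev2 P`_1 z1 z2 * z3.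
Proof.
move=> sP; rewrite /ev3 (@horner_coef_wide _ 2).
  by rewrite big_ord_recr big_ord_recr big_ord0 /= !coef_map_id0 ?ev2_0 // add0r expr0 mulr1 expr1.
exact: leq_trans (size_poly _ _) sP.
Qed.

Lemma coef_lin0 (p1 p2 : {poly {poly C}}) : (p1%:P + 'X * p2%:P)`_0 = p1.
Proof. by rewrite coefD coefC mulrC coefMX /= addr0. Qed.

Lemma coef_lin1 (p1 p2 : {poly {poly C}}) : (p1%:P + 'X * p2%:P)`_1 = p2.
Proof. by rewrite coefD coefC mulrC coefMX /= coefC add0r. Qed.

Lemma size_lin (p1 p2 : {poly {poly C}}) : (size (p1%:P + 'X * p2%:P)%R <= 2)%N.
Proof.
apply: leq_trans (size_polyD _ _) _; rewrite geq_max; apply/andP; split.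
  exact: leq_trans (size_polyC_leq1 _) _.
apply: leq_trans (size_mul_leq _ _) _; rewrite size_polyX.
by have := size_polyC_leq1 p2; case: (size _) => [|[]].
Qed.

Lemma refl3_0 m n (P : {poly {poly {poly C}}}) : (refl3 m n 1 P)`_0 = refl2 m n P`_1.
Proof. by rewrite /refl3 coef_poly. Qed.

Lemma refl3_1 m n (P : {poly {poly {poly C}}}) : (refl3 m n 1 P)`_1 = refl2 m n P`_0.
Proof. by rewrite /refl3 coef_poly. Qed.

Lemma size_refl3 m n (P : {poly {poly {poly C}}}) : (size (refl3 m n 1 P) <= 2)%N.
Proof. exact: size_poly. Qed.

End Ev3.

Section Refl.
Variable R : realType.
Local Notation C := (R[i]).
Local Notation nm := (@nm R).

Lemma ev2_sum m n (P : {poly {poly C}}) z1 z2 : deg2_le m n P ->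
  ev2 P z1 z2 = \sum_(j < n.+1) \sum_(i < m.+1) (P`_j)`_i * z1 ^+ i * z2 ^+ j.
Proof.
move=> [sP sPj]; rewrite ev2E (@horner_coef_wide _ n.+1); last first.
  exact: leq_trans (size_poly _ _) sP.
apply: eq_bigr => j _; rewrite coef_map_id0 ?rmorph0 //= horner_evalE (@horner_coef_wide _ m.+1) //.
by rewrite mulr_suml.
Qed.

Lemma deg2_refl m n (P : {poly {poly C}}) : deg2_le m n (refl2 m n P).
Proof.
split; first exact: size_poly.
move=> j; rewrite /refl2 coef_poly; case: ifP => _; first exact: size_poly.
by rewrite size_poly0.
Qed.

Lemma refl2_ev m n (P : {poly {poly C}}) z1 z2 : deg2_le m n P ->
  z1 != 0 -> z2 != 0 ->
  ev2 (refl2 m n P) z1 z2 = z1 ^+ m * z2 ^+ n * (ev2 P (z1^*%C^-1) (z2^*%C^-1))^*%C.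
Proof.
move=> dP nz1 nz2; rewrite (ev2_sum z1 z2 (deg2_refl m n P)) (ev2_sum _ _ dP).
rewrite rmorph_sum mulr_sumr [LHS](reindex_inj rev_ord_inj); apply: eq_bigr => j _.
rewrite rmorph_sum mulr_sumr [LHS](reindex_inj rev_ord_inj); apply: eq_bigr => i _.
rewrite /refl2 coef_poly /= ltn_subrL /= coef_poly ltn_subrL /=.
have lej : (j <= n)%N by rewrite -ltnS.
have lei : (i <= m)%N by rewrite -ltnS.
rewrite !subSS !subKn //.
rewrite !rmorphM /= !rmorphXn /= !fmorphV /= !conjcK.
have E1 : z1 ^+ m = z1 ^+ (m - i) * z1 ^+ i by rewrite -exprD subnK.
have E2 : z2 ^+ n = z2 ^+ (n - j) * z2 ^+ j by rewrite -exprD subnK.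
rewrite E1 E2.
have K1 : z1 ^+ i * z1^-1 ^+ i = 1 by rewrite -exprMn mulfV // expr1n.
have K2 : z2 ^+ j * z2^-1 ^+ j = 1 by rewrite -exprMn mulfV // expr1n.
transitivity (((P`_j)`_i)^*%C * z1 ^+ (m - i) * z2 ^+ (n - j) * (z1 ^+ i * z1^-1 ^+ i) * (z2 ^+ j * z2^-1 ^+ j)).
  by rewrite K1 K2 !mulr1.
ring.
Qed.

End Refl.

Section Comp.
Variable R : realType.
Local Notation C := (R[i]).
Local Notation nm := (@nm R).
Local Notation Rc := (@complex.Re R).
Local Notation Ic := (@complex.Im R).

Lemma nm_sq (x : C) : nm x ^+ 2 = Rc x ^+ 2 + Ic x ^+ 2.
Proof. by rewrite /nm normc_def /= sqr_sqrtr // addr_ge0 ?sqr_ge0. Qed.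

Lemma cReM (x y : C) : Rc (x * y) = Rc x * Rc y - Ic x * Ic y.
Proof. by case: x => a b; case: y => c d. Qed.

Lemma cImM (x y : C) : Ic (x * y) = Rc x * Ic y + Ic x * Rc y.
Proof. by case: x => a b; case: y => c d. Qed.

Lemma cReD (x y : C) : Rc (x + y) = Rc x + Rc y.
Proof. by case: x => a b; case: y => c d. Qed.

Lemma cImD (x y : C) : Ic (x + y) = Ic x + Ic y.
Proof. by case: x => a b; case: y => c d. Qed.

Lemma cReN (x : C) : Rc (- x) = - Rc x.
Proof. by case: x => a b. Qed.

Lemma cImN (x : C) : Ic (- x) = - Ic x.
Proof. by case: x => a b. Qed.

Lemma cReJ (x : C) : Rc (x^*%C) = Rc x.
Proof. by case: x => a b. Qed.

Lemma cImJ (x : C) : Ic (x^*%C) = - Ic x.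
Proof. by case: x => a b. Qed.

Lemma cReC (k : R) : Rc k%:C = k. Proof. by []. Qed.
Lemma cImC (k : R) : Ic k%:C = 0. Proof. by []. Qed.
Lemma cRe1 : Rc 1 = 1. Proof. by []. Qed.
Lemma cIm1 : Ic 1 = 0. Proof. by []. Qed.
Lemma cRe0 : Rc 0 = 0. Proof. by []. Qed.
Lemma cIm0 : Ic 0 = 0. Proof. by []. Qed.
Lemma cReCx (a b : R) : Rc (a +i* b) = a. Proof. by []. Qed.
Lemma cImCx (a b : R) : Ic (a +i* b) = b. Proof. by []. Qed.

Lemma nm_le (x : C) (c : R) : 0 <= c -> Rc x ^+ 2 + Ic x ^+ 2 <= c ^+ 2 -> nm x <= c.
Proof. by rewrite -nm_sq => c0 h; have := nm_ge0 x; nra. Qed.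

Lemma nm_lt (x : C) (c : R) : 0 <= c -> Rc x ^+ 2 + Ic x ^+ 2 < c ^+ 2 -> nm x < c.
Proof. by rewrite -nm_sq => c0 h; have := nm_ge0 x; nra. Qed.

End Comp.

Section ImZero.
Variable R : realType.
Local Notation C := (R[i]).
Local Notation nm := (@nm R).
Local Notation Rc := (@complex.Re R).
Local Notation Ic := (@complex.Im R).

Lemma im_zero (t1 t2 g1 g2 : C) (Q : R) : nm t1 = 1 -> nm t2 = 1 -> 0 <= Q ->
 (forall h1 h2, nm h1 <= 1 -> nm h2 <= 1 -> nm (t1+h1) < 1 -> nm (t2+h2) < 1 ->
   - (Q * (nm h1 + nm h2)^+2) <= Rc (g1*h1 + g2*h2)) -> Ic (t1*g1) = 0.
Proof.
move=> nt1 nt2 Q0 H; apply/eqP; apply/negPn/negP => mu0.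
set mu := Ic (t1 * g1) in mu0.
set u1 := Rc (t1 * g1); set v1 := Rc (t2 * g2).
have amu : 0 < `|mu| by rewrite normr_gt0.
have [sg [sg2 sgmu]] : exists sg : R, sg ^+ 2 = 1 /\ sg * mu = `|mu|.
  case: (ltrP 0 mu) => h; [exists 1 | exists (-1)].
    by rewrite expr1n mul1r gtr0_norm.
  by rewrite sqrrN expr1n mulN1r ler0_norm.
set M := `|u1| + `|v1| + 1.
have M1 : 1 <= M by rewrite /M; have := normr_ge0 u1; have := normr_ge0 v1; lra.
set eps := `|mu| / (4 * M + `|mu|).
have epsE : eps * (4 * M + `|mu|) = `|mu| by rewrite /eps mulfVK //; apply: lt0r_neq0; lra.
have eps0 : 0 < eps by rewrite /eps divr_gt0 //; lra.
have eps1 : eps <= 1 by nra.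
have epsM : eps * M * 4 <= `|mu| by nra.
set x := eps * `|mu| / (2 * (36 * Q + `|mu|)).
have xE : x * (2 * (36 * Q + `|mu|)) = eps * `|mu| by rewrite /x mulfVK //; apply: lt0r_neq0; lra.
have x0 : 0 < x by rewrite /x; apply: divr_gt0; [apply: mulr_gt0 => // | ]; lra.
have eQ := mulr_ge0 (ltW eps0) Q0.
have x2 : 2 * x <= eps.
  have hp : 0 < 36 * Q + `|mu| by lra.
  rewrite -(ler_pM2r hp); nra.
have xQ : 72 * Q * x <= `|mu|.
  have xQ0 := mulr_ge0 Q0 (ltW x0).
  have : 72 * Q * x <= eps * `|mu| by nra.
  by move=> h; apply: le_trans h _; nra.
set w1 : C := (- (x * eps)) +i* (sg * x).
set h1 := t1 * w1; set h2 := t2 * (- (x * eps))%:C.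
have nh1 : nm h1 <= 2 * x.
  rewrite /h1 nmM nt1 mul1r; apply: nm_le; first lra.
  have xe1 : x * eps <= x by nra.
  have xe0 : 0 <= x * eps by nra.
  rewrite cReCx cImCx exprMn sg2 sqrrN !expr2; nra.
have nh2 : nm h2 = x * eps.
  by rewrite /h2 nmM nt2 mul1r nm_real ler0_norm ?opprK //; rewrite oppr_le0; nra.
move: (H h1 h2) => {}H.
rewrite nh2 in H.
have Hre : Rc (g1 * h1 + g2 * h2) = - (x * eps) * (u1 + v1) - x * `|mu|.
  have -> : g1 * h1 + g2 * h2 = (t1 * g1) * w1 + (t2 * g2) * (- (x * eps))%:C
    by rewrite /h1 /h2; ring.
  rewrite cReD (cReM (t1 * g1)) (cReM (t2 * g2)) cReCx cImCx cReC cImC -/u1 -/v1 -/mu -sgmu. rewrite mulr0 subr0; ring.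
rewrite Hre in H.
have : - (Q * (nm h1 + x * eps) ^+ 2) <= - (x * eps) * (u1 + v1) - x * `|mu|.
  apply: H.
  - lra.
  - nra.
  - rewrite /h1 -{1}[t1]mulr1 -mulrDr nmM nt1 mul1r; apply: nm_lt; first lra.
    rewrite cReD cImD cRe1 cIm1 cReCx cImCx add0r exprMn sg2 mul1r.
    have hx : x * x * 2 <= x * eps by nra.
    have hy : (x * eps) * (x * eps) <= x * x.
      have : x * eps <= x by nra.
      have : 0 <= x * eps by nra.
      nra.
    have : 0 < x * eps by nra.
    rewrite !expr2; nra.
  - rewrite /h2 -{1}[t2]mulr1 -mulrDr nmM nt2 mul1r; apply: nm_lt; first lra.
    rewrite cReD cImD cRe1 cIm1 cReC cImC addr0 expr0n /= addr0 expr1n.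
    have : 0 < x * eps by nra.
    have : x * eps <= 1 by nra.
    rewrite !expr2; nra.
have hs : nm h1 + x * eps <= 3 * x by nra.
have hs0 : 0 <= nm h1 + x * eps by have := nm_ge0 h1; nra.
have : (nm h1 + x * eps) ^+ 2 <= 9 * x ^+ 2 by rewrite !expr2; nra.
have : - (x * eps) * (u1 + v1) <= x * eps * M.
  have : - (u1 + v1) <= M by rewrite /M; have := ler_norm (- (u1 + v1)); rewrite normrN;
    have := ler_normD u1 v1; lra.
  have := mulr_gt0 x0 eps0; nra.
move=> h3 h4 h5.
have : x * `|mu| <= 9 * Q * x ^+ 2 + x * eps * M by nra.
rewrite expr2 => h6.
have : `|mu| <= 9 * Q * x + eps * M.
  have : x * `|mu| <= x * (9 * Q * x + eps * M) by lra.
  by rewrite ler_pM2l.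
nra.
Qed.

End ImZero.

Section Aux.
Variable R : realType.
Local Notation C := (R[i]).
Local Notation nm := (@nm R).
Local Notation Rc := (@complex.Re R).
Local Notation Ic := (@complex.Im R).

Lemma nm_sqD (u w : C) : nm (u + w) ^+ 2 = nm u ^+ 2 + 2 * Rc (u^*%C * w) + nm w ^+ 2.
Proof.
rewrite !nm_sq cReD cImD cReM cReJ cImJ; ring.
Qed.

Lemma conj_mul_self (t : C) : t * t^*%C = (nm t ^+ 2)%:C.
Proof.
rewrite nm_sq; case: t => a b; simpc; rewrite /= !expr2.
by congr (_ +i* _); ring.
Qed.

Lemma unit_conj (t : C) : nm t = 1 -> t * t^*%C = 1.
Proof. by move=> h; rewrite conj_mul_self h expr1n. Qed.

Lemma conj_sub_real (w : C) : Ic w = 0 -> w - w^*%C = 0.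
Proof. by case: w => a b /= ->; simpc. Qed.

Lemma nm_1add_ge (u : C) : 1 - nm u <= nm (1 + u).
Proof.
have := nmD (1 + u) (- u); rewrite addrK nm1 nmN; lra.
Qed.

Lemma refl_pt (t h : C) : nm t = 1 -> nm h <= 1/2 ->
  let k := ((t + h)^*%C)^-1 - t in
  nm k <= 2 * nm h /\ nm (k + t ^+ 2 * h^*%C) <= 2 * nm h ^+ 2.
Proof.
move=> nt nh k.
set u := t * h^*%C.
have nu : nm u = nm h by rewrite /u nmM nt mul1r nmJ.
have n1u : 1/2 <= nm (1 + u) by have := nm_1add_ge u; lra.
have u1 : 1 + u != 0.
  by apply/eqP => e; move: n1u; rewrite e nm0; lra.
have t0 : t != 0 by apply/eqP => e; move: nt; rewrite e nm0 => /eqP; rewrite eq_sym oner_eq0.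
have tt := unit_conj nt.
have ts : t^*%C = t^-1 by apply: (mulfI t0); rewrite tt mulfV.
have kE : k = - (t * u) / (1 + u).
  rewrite /k rmorphD /= ts.
  have -> : t^-1 + h^*%C = (1 + u) / t by rewrite /u; field.
  by rewrite invf_div; field.
have eE : k + t ^+ 2 * h^*%C = t * u ^+ 2 / (1 + u).
  rewrite kE /u; field; exact: u1.
have hu : nm h <= 1/2 by [].
have nh0 := nm_ge0 h.
have n1u0 : 0 < nm (1 + u) by lra.
split.
  rewrite kE nmM nmN nmM nt mul1r nu nmV.
  rewrite ler_pdivrMr //; nra.
rewrite eE nmM nmM nt mul1r nmX nu nmV.
rewrite ler_pdivrMr //; have := sqr_ge0 (nm h); nra.
Qed.

End Aux.

Section DB.
Variable R : realType.
Local Notation C := (R[i]).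
Local Notation nm := (@nm R).
Local Notation Rc := (@complex.Re R).
Local Notation Ic := (@complex.Im R).

Lemma powle (x y : R) n : 0 <= x -> x <= y -> x ^+ n <= y ^+ n.
Proof. by move=> x0 xy; apply: lerXn2r; rewrite ?nnegrE //; lra. Qed.

Lemma Hgh_lemma (p1 p2 : {poly {poly C}}) (t1 t2 : C) a1 a2 Ka b1 b2 Kb Aa :
  let al := ev2 p1 t1 t2 in let be := ev2 p2 t1 t2 in
  (forall z1 z2, nm z1 < 1 -> nm z2 < 1 -> nm (ev2 p2 z1 z2) <= nm (ev2 p1 z1 z2)) ->
  nm al = nm be -> 0 <= Ka -> 0 <= Kb -> 0 <= Aa ->
  (forall h1 h2, nm h1 <= 1 -> nm h2 <= 1 ->
    nm (ev2 p1 (t1+h1) (t2+h2) - al - (a1*h1 + a2*h2)) <= Ka * (nm h1 + nm h2)^+2) ->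
  (forall h1 h2, nm h1 <= 1 -> nm h2 <= 1 ->
    nm (ev2 p2 (t1+h1) (t2+h2) - be - (b1*h1 + b2*h2)) <= Kb * (nm h1 + nm h2)^+2) ->
  (forall h1 h2, nm h1 <= 1 -> nm h2 <= 1 ->
    nm (ev2 p1 (t1+h1) (t2+h2) - al) <= Aa * (nm h1 + nm h2)) ->
  forall h1 h2, nm h1 <= 1 -> nm h2 <= 1 -> nm (t1+h1) < 1 -> nm (t2+h2) < 1 ->
   - ((Aa ^+ 2 + nm al * Ka + nm be * Kb) * (nm h1 + nm h2)^+2) <=
   Rc ((al^*%C * a1 - be^*%C * b1) * h1 + (al^*%C * a2 - be^*%C * b2) * h2).
Proof.
move=> al be Hin nab Ka0 Kb0 Aa0 HA HB LA h1 h2 n1 n2 i1 i2.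
have Hab := Hin _ _ i1 i2.
have HA' := HA h1 h2 n1 n2; have HB' := HB h1 h2 n1 n2; have LA' := LA h1 h2 n1 n2.
move: Hab HA' HB' LA'.
set Y := ev2 p1 (t1 + h1) (t2 + h2) - al.
set V := ev2 p2 (t1 + h1) (t2 + h2) - be.
have -> : ev2 p1 (t1 + h1) (t2 + h2) = al + Y by rewrite /Y; ring.
have -> : ev2 p2 (t1 + h1) (t2 + h2) = be + V by rewrite /V; ring.
set ra := Y - (a1 * h1 + a2 * h2).
set rb := V - (b1 * h1 + b2 * h2).
set s := nm h1 + nm h2.
move=> Hab HA' HB' LA'.
have sq : nm (be + V) ^+ 2 <= nm (al + Y) ^+ 2 by apply: powle (nm_ge0 _) Hab.
rewrite (nm_sqD al Y) (nm_sqD be V) nab in sq.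
have eq : (al^*%C * a1 - be^*%C * b1) * h1 + (al^*%C * a2 - be^*%C * b2) * h2 =
  al^*%C * Y + (- (be^*%C * V)) + (- (al^*%C * ra)) + be^*%C * rb.
  by rewrite /ra /rb; ring.
rewrite eq !cReD !cReN.
have r1 : Rc (al^*%C * ra) <= nm al * (Ka * s ^+ 2).
  apply: le_trans (Re_le_nm _) _; rewrite nmM nmJ; apply: ler_wpM2l; [exact: nm_ge0 | exact: HA'].
have r2 : - (nm be * (Kb * s ^+ 2)) <= Rc (be^*%C * rb).
  apply: le_trans (Re_ge_nm _); rewrite lerN2 nmM nmJ; apply: ler_wpM2l; [exact: nm_ge0 | exact: HB'].
have y2 : nm Y ^+ 2 <= (Aa * s) ^+ 2 by apply: powle (nm_ge0 _) LA'.
have v2 := sqr_ge0 (nm V).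
rewrite exprMn in y2.
nra.
Qed.

End DB.

Section DB2.
Variable R : realType.
Local Notation C := (R[i]).
Local Notation nm := (@nm R).
Local Notation Rc := (@complex.Re R).
Local Notation Ic := (@complex.Im R).

Lemma nm_tri4 (x y z w : C) : nm (x + y + z + w) <= nm x + nm y + nm z + nm w.
Proof.
apply: le_trans (nmD _ _) _; have := nmD (x + y) z; have := nmD x y; lra.
Qed.

Lemma nm_subM (x y u v : C) : nm (x * y - u * v) <= nm x * nm y + nm u * nm v.
Proof. by apply: le_trans (nmD _ _) _; rewrite nmN !nmM. Qed.

Lemma nm_addJM (x y u v : C) : nm (x^*%C * y^*%C + u^*%C * v^*%C) <= nm x * nm y + nm u * nm v.
Proof. by apply: le_trans (nmD _ _) _; rewrite !nmM !nmJ. Qed.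

Lemma D_bound (m n : nat) (p1 p2 : {poly {poly C}}) (t1 t2 : C) :
  deg2_le m n p1 -> deg2_le m n p2 -> nm t1 = 1 -> nm t2 = 1 ->
  (forall z1 z2, nm z1 < 1 -> nm z2 < 1 -> nm (ev2 p2 z1 z2) <= nm (ev2 p1 z1 z2)) ->
  nm (ev2 p1 t1 t2) = nm (ev2 p2 t1 t2) ->
  exists KD : R, 0 <= KD /\ forall h1 h2, nm h1 <= 1/2 -> nm h2 <= 1/2 ->
   nm (ev2 (refl2 m n p1) (t1+h1) (t2+h2) * ev2 p1 (t1+h1) (t2+h2)
       - ev2 (refl2 m n p2) (t1+h1) (t2+h2) * ev2 p2 (t1+h1) (t2+h2))
   <= KD * (nm h1 + nm h2)^+2.
Proof.
move=> d1 d2 nt1 nt2 Hin nab.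
have [a1 [a2 [Ka [Ka0 HA]]]] := DiffP p1 t1 t2.
have [b1 [b2 [Kb [Kb0 HB]]]] := DiffP p2 t1 t2.
have [Aa [Aa0 LA]] := Diff_lip (DiffP p1 t1 t2).
have [Ab [Ab0 LB]] := Diff_lip (DiffP p2 t1 t2).
have Hgh := Hgh_lemma Hin nab Ka0 Kb0 Aa0 HA HB LA.
move: Hgh HA HB LA LB nab.
set al := ev2 p1 t1 t2; set be := ev2 p2 t1 t2 => Hgh HA HB LA LB nab.
set g1 := al^*%C * a1 - be^*%C * b1; set g2 := al^*%C * a2 - be^*%C * b2.
set Q := Aa ^+ 2 + nm al * Ka + nm be * Kb.
have Q0 : 0 <= Q by rewrite /Q; have := nm_ge0 al; have := nm_ge0 be; nra.
have im1 : Ic (t1 * g1) = 0 by apply: (im_zero nt1 nt2 Q0); exact: Hgh.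
have im2 : Ic (t2 * g2) = 0.
  apply: (im_zero nt2 nt1 Q0) => h2 h1 n2 n1 i2 i1.
  by rewrite [nm h2 + nm h1]addrC [g2 * h2 + _]addrC; apply: Hgh.
pose KE := 2 * (nm g1 + nm g2) + 5 * (nm al * Ka + nm be * Kb) + 2 * (Aa ^+ 2 + Ab ^+ 2).
have KE0 : 0 <= KE.
  rewrite /KE; have := nm_ge0 al; have := nm_ge0 be; have := nm_ge0 g1; have := nm_ge0 g2.
  have := sqr_ge0 Aa; have := sqr_ge0 Ab; nra.
exists (2 ^+ m * 2 ^+ n * KE); split.
  by apply: mulr_ge0 => //; apply: mulr_ge0; apply: exprn_ge0.
move=> h1 h2 n1 n2.
have nh1 := nm_ge0 h1; have nh2 := nm_ge0 h2.
have [kb1 eb1] := refl_pt nt1 n1; have [kb2 eb2] := refl_pt nt2 n2.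
move: kb1 eb1 kb2 eb2.
set k1 := ((t1 + h1)^*%C)^-1 - t1; set k2 := ((t2 + h2)^*%C)^-1 - t2 => kb1 eb1 kb2 eb2.
have zlow : forall (t h : C), nm t = 1 -> nm h <= 1/2 -> 1/2 <= nm (t + h).
  move=> t h nt nh; have := nmD (t + h) (- h); rewrite addrK nt nmN; lra.
have z10 : t1 + h1 != 0.
  by apply/eqP => e; have := zlow _ _ nt1 n1; rewrite e nm0; lra.
have z20 : t2 + h2 != 0.
  by apply/eqP => e; have := zlow _ _ nt2 n2; rewrite e nm0; lra.
have zhigh : forall (t h : C), nm t = 1 -> nm h <= 1/2 -> nm (t + h) <= 2.
  move=> t h nt nh; have := nmD t h; rewrite nt; lra.
rewrite (refl2_ev d1 z10 z20) (refl2_ev d2 z10 z20).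
have -> : ((t1 + h1)^*%C)^-1 = t1 + k1 by rewrite /k1; ring.
have -> : ((t2 + h2)^*%C)^-1 = t2 + k2 by rewrite /k2; ring.
set Xa := ev2 p1 (t1 + k1) (t2 + k2) - al.
set Xb := ev2 p2 (t1 + k1) (t2 + k2) - be.
set Y := ev2 p1 (t1 + h1) (t2 + h2) - al.
set V := ev2 p2 (t1 + h1) (t2 + h2) - be.
have -> : ev2 p1 (t1 + k1) (t2 + k2) = al + Xa by rewrite /Xa; ring.
have -> : ev2 p2 (t1 + k1) (t2 + k2) = be + Xb by rewrite /Xb; ring.
have -> : ev2 p1 (t1 + h1) (t2 + h2) = al + Y by rewrite /Y; ring.
have -> : ev2 p2 (t1 + h1) (t2 + h2) = be + V by rewrite /V; ring.
have nk1 : nm k1 <= 1 by lra.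
have nk2 : nm k2 <= 1 by lra.
have nh1' : nm h1 <= 1 by lra.
have nh2' : nm h2 <= 1 by lra.
have bXa : nm (Xa - (a1*k1 + a2*k2)) <= Ka * (nm k1 + nm k2)^+2 := HA k1 k2 nk1 nk2.
have bXb : nm (Xb - (b1*k1 + b2*k2)) <= Kb * (nm k1 + nm k2)^+2 := HB k1 k2 nk1 nk2.
have bY : nm (Y - (a1*h1 + a2*h2)) <= Ka * (nm h1 + nm h2)^+2 := HA h1 h2 nh1' nh2'.
have bV : nm (V - (b1*h1 + b2*h2)) <= Kb * (nm h1 + nm h2)^+2 := HB h1 h2 nh1' nh2'.
have lXa : nm Xa <= Aa * (nm k1 + nm k2) := LA k1 k2 nk1 nk2.
have lXb : nm Xb <= Ab * (nm k1 + nm k2) := LB k1 k2 nk1 nk2.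
have lY : nm Y <= Aa * (nm h1 + nm h2) := LA h1 h2 nh1' nh2'.
have lV : nm V <= Ab * (nm h1 + nm h2) := LB h1 h2 nh1' nh2'.
have hz1 := zhigh _ _ nt1 n1; have hz2 := zhigh _ _ nt2 n2.
clearbody k1 k2 Xa Xb Y V.
set e1 := k1 + t1 ^+ 2 * h1^*%C; set e2 := k2 + t2 ^+ 2 * h2^*%C.
set rah := Y - (a1 * h1 + a2 * h2); set rbh := V - (b1 * h1 + b2 * h2).
set rak := Xa - (a1 * k1 + a2 * k2); set rbk := Xb - (b1 * k1 + b2 * k2).
have zz : al^*%C * al - be^*%C * be = 0.
  by rewrite ![_^*%C * _]mulrC !conj_mul_self nab subrr.
have w1 : g1 * h1 - g1^*%C * (t1^*%C) ^+ 2 * h1 = 0.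
  have tt := unit_conj nt1; have ww := conj_sub_real im1.
  have -> : g1 * h1 - g1^*%C * (t1^*%C) ^+ 2 * h1 =
     t1^*%C * h1 * ((t1 * g1) - (t1 * g1)^*%C) + g1 * h1 * (1 - t1 * t1^*%C).
    by rewrite rmorphM /=; ring.
  by rewrite ww tt subrr !mulr0 addr0.
have w2 : g2 * h2 - g2^*%C * (t2^*%C) ^+ 2 * h2 = 0.
  have tt := unit_conj nt2; have ww := conj_sub_real im2.
  have -> : g2 * h2 - g2^*%C * (t2^*%C) ^+ 2 * h2 =
     t2^*%C * h2 * ((t2 * g2) - (t2 * g2)^*%C) + g2 * h2 * (1 - t2 * t2^*%C).
    by rewrite rmorphM /=; ring.
  by rewrite ww tt subrr !mulr0 addr0.
have Eid : (al + Xa)^*%C * (al + Y) - (be + Xb)^*%C * (be + V) =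
   (g1^*%C * e1^*%C + g2^*%C * e2^*%C) + (al^*%C * rah - be^*%C * rbh)
   + (al^*%C * rak - be^*%C * rbk)^*%C + (Xa^*%C * Y - Xb^*%C * V).
  apply/eqP; rewrite -subr_eq0; apply/eqP.
  rewrite -[RHS](_ : (al^*%C * al - be^*%C * be) + (g1 * h1 - g1^*%C * (t1^*%C) ^+ 2 * h1)
     + (g2 * h2 - g2^*%C * (t2^*%C) ^+ 2 * h2) = 0); last by rewrite zz w1 w2 !addr0.
  rewrite /e1 /e2 /rah /rbh /rak /rbk /g1 /g2.
  rewrite !(rmorphD, rmorphB, rmorphN, rmorphM, rmorphXn) /= !conjcK.
  ring.
have -> : (t1 + h1) ^+ m * (t2 + h2) ^+ n * (al + Xa)^*%C * (al + Y) -
    (t1 + h1) ^+ m * (t2 + h2) ^+ n * (be + Xb)^*%C * (be + V) =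
    ((t1 + h1) ^+ m * (t2 + h2) ^+ n) * ((al + Xa)^*%C * (al + Y) - (be + Xb)^*%C * (be + V))
  by ring.
rewrite Eid nmM.
have Z : nm ((t1 + h1) ^+ m * (t2 + h2) ^+ n) <= 2 ^+ m * 2 ^+ n.
  rewrite nmM !nmX; apply: ler_pM; try apply: exprn_ge0; try exact: nm_ge0;
  apply: powle => //; exact: nm_ge0.
have -> : 2 ^+ m * 2 ^+ n * KE * (nm h1 + nm h2) ^+ 2 =
  (2 ^+ m * 2 ^+ n) * (KE * (nm h1 + nm h2) ^+ 2) by ring.
apply: ler_pM (nm_ge0 _) (nm_ge0 _) Z _.
set s := nm h1 + nm h2; set sk := nm k1 + nm k2.
have s0 : 0 <= s by rewrite /s; lra.
have sk2 : sk <= 2 * s by rewrite /sk /s; lra.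
have sk0 : 0 <= sk by rewrite /sk; have := nm_ge0 k1; have := nm_ge0 k2; lra.
have hs1 : nm h1 ^+ 2 <= s ^+ 2 by apply: powle => //; rewrite /s; lra.
have hs2 : nm h2 ^+ 2 <= s ^+ 2 by apply: powle => //; rewrite /s; lra.
have sks : sk ^+ 2 <= 4 * s ^+ 2.
  have : sk ^+ 2 <= (2 * s) ^+ 2 by apply: powle.
  by rewrite exprMn; have -> : (2 : R) ^+ 2 = 4 by rewrite expr2; lra.
apply: le_trans (nm_tri4 _ _ _ _) _.
have F1 : nm (g1^*%C * e1^*%C + g2^*%C * e2^*%C) <= 2 * (nm g1 + nm g2) * s ^+ 2.
  apply: le_trans (nm_addJM _ _ _ _) _.
  have := ler_wpM2l (nm_ge0 g1) eb1; have := ler_wpM2l (nm_ge0 g2) eb2.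
  have := nm_ge0 g1; have := nm_ge0 g2; nra.
have F2 : nm (al^*%C * rah - be^*%C * rbh) <= nm al * (Ka * s ^+ 2) + nm be * (Kb * s ^+ 2).
  apply: le_trans (nm_subM _ _ _ _) _; rewrite !nmJ.
  by apply: lerD; apply: ler_wpM2l; rewrite ?nm_ge0.
have F3 : nm ((al^*%C * rak - be^*%C * rbk)^*%C) <= 4 * (nm al * Ka + nm be * Kb) * s ^+ 2.
  rewrite nmJ; apply: le_trans (nm_subM _ _ _ _) _; rewrite !nmJ.
  have := ler_wpM2l (nm_ge0 al) bXa; have := ler_wpM2l (nm_ge0 be) bXb.
  rewrite -/sk => u1 u2.
  have := ler_wpM2l (mulr_ge0 (nm_ge0 al) Ka0) sks.
  have := ler_wpM2l (mulr_ge0 (nm_ge0 be) Kb0) sks.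
  nra.
have F4 : nm (Xa^*%C * Y - Xb^*%C * V) <= 2 * (Aa ^+ 2 + Ab ^+ 2) * s ^+ 2.
  apply: le_trans (nm_subM _ _ _ _) _; rewrite !nmJ.
  have := ler_pM (nm_ge0 _) (nm_ge0 _) lXa lY.
  have := ler_pM (nm_ge0 _) (nm_ge0 _) lXb lV.
  rewrite -/sk -/s => u1 u2.
  have := sqr_ge0 Aa; have := sqr_ge0 Ab.
  have : Aa * sk * (Aa * s) <= 2 * Aa ^+ 2 * s ^+ 2.
    rewrite !expr2; have := mulr_ge0 (mulr_ge0 Aa0 Aa0) s0; nra.
  have : Ab * sk * (Ab * s) <= 2 * Ab ^+ 2 * s ^+ 2.
    rewrite !expr2; have := mulr_ge0 (mulr_ge0 Ab0 Ab0) s0; nra.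
  nra.
rewrite /KE; nra.
Qed.

End DB2.

Section Main.
Variable R : realType.
Local Notation C := (R[i]).
Local Notation nm := (@nm R).

Lemma evp (p1 p2 : {poly {poly C}}) z1 z2 z3 :
  ev3 (p1%:P + 'X * p2%:P) z1 z2 z3 = ev2 p1 z1 z2 + ev2 p2 z1 z2 * z3.
Proof. by rewrite (ev3_lin _ _ _ (size_lin p1 p2)) coef_lin0 coef_lin1. Qed.

Lemma evpt m n (p1 p2 : {poly {poly C}}) z1 z2 z3 :
  ev3 (refl3 m n 1 (p1%:P + 'X * p2%:P)) z1 z2 z3 =
  ev2 (refl2 m n p2) z1 z2 + ev2 (refl2 m n p1) z1 z2 * z3.
Proof. by rewrite (ev3_lin _ _ _ (size_refl3 _ _ _)) refl3_0 refl3_1 coef_lin0 coef_lin1. Qed.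

Lemma pos_real (c : C) : 0 < c -> c = (complex.Re c)%:C /\ 0 < complex.Re c.
Proof. case: c => a b; rewrite ltcE /= => /andP[/eqP e h]. by rewrite e. Qed.

End Main.

Local Close Scope complex_scope.

Theorem lemma4p5 (R : realType) (m n : nat)
    (p1 p2 : {poly {poly R[i]}}) (t1 t2 t3 : R[i]) :
  let p : {poly {poly {poly R[i]}}} := p1%:P + 'X * p2%:P in
  let pt := refl3 m n 1 p in
  deg2_le m n p1 -> deg2_le m n p2 ->
  zero_free_D3 p -> ~ common_factor p pt -> irreducible3 p ->
  `|t1| = 1 -> `|t2| = 1 -> `|t3| = 1 -> ev3 p t1 t2 t3 = 0 ->
  ~ (forall w : R[i], `|w| = 1 -> ev3 p t1 t2 w = 0) ->
  nt_limit (fun z1 z2 z3 => ev3 pt z1 z2 z3 / ev3 p z1 z2 z3) t1 t2 t3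
    (ev2 (refl2 m n p2) t1 t2 / ev2 p1 t1 t2).
Proof.
move=> p pt dp1 dp2 zf _ _ nt1 nt2 nt3 ev0 nvert.
have ep : forall z1 z2 z3, ev3 p z1 z2 z3 = ev2 p1 z1 z2 + ev2 p2 z1 z2 * z3 := evp p1 p2.
have ept : forall z1 z2 z3, ev3 pt z1 z2 z3 =
   ev2 (refl2 m n p2) z1 z2 + ev2 (refl2 m n p1) z1 z2 * z3 := evpt m n p1 p2.
move/nm_eq1: nt1 => nt1; move/nm_eq1: nt2 => nt2; move/nm_eq1: nt3 => nt3.
have zf' : forall z1 z2 z3, nm z1 < 1 -> nm z2 < 1 -> nm z3 < 1 ->
    ev2 p1 z1 z2 + ev2 p2 z1 z2 * z3 != 0.
  by move=> z1 z2 z3 h1 h2 h3; rewrite -ep; apply: zf; rewrite nm_lt1.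
have Hin : forall z1 z2, nm z1 < 1 -> nm z2 < 1 -> nm (ev2 p2 z1 z2) <= nm (ev2 p1 z1 z2).
  move=> z1 z2 h1 h2; rewrite leNgt; apply/negP => lt.
  set A := ev2 p1 z1 z2 in lt *; set B := ev2 p2 z1 z2 in lt *.
  have nA := nm_ge0 A.
  have B0 : B != 0 by rewrite -nm_eq0; apply/eqP => e; move: lt; rewrite e; lra.
  have nB : 0 < nm B by lra.
  have hz : nm (- A / B) < 1 by rewrite nmM nmN nmV ltr_pdivrMr // mul1r.
  have := zf' z1 z2 (- A / B) h1 h2 hz.
  have -> : A + B * (- A / B) = 0 by field.
  by rewrite eqxx.
set al := ev2 p1 t1 t2; set be := ev2 p2 t1 t2.
have e0 : al + be * t3 = 0 by rewrite -ep.
have be0 : be != 0.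
  apply/eqP => b0; apply: nvert => w _.
  by rewrite ep -/al -/be; move: e0; rewrite b0 !mul0r !addr0 => ->.
have nab : nm al = nm be.
  have -> : al = - (be * t3) by rewrite -(subr0 al) -e0; ring.
  by rewrite nmN nmM nt3 mulr1.
have nb0 : 0 < nm be by rewrite lt_def nm_eq0 be0 nm_ge0.
have na0 : 0 < nm al by rewrite nab.
have al0 : al != 0 by rewrite -nm_eq0; apply/eqP => e; move: na0; rewrite e; lra.
have [KD [KD0 HD]] := D_bound dp1 dp2 nt1 nt2 Hin nab.
have [Aa [Aa0 LA]] := Diff_lip (DiffP p1 t1 t2).
have [Ab [Ab0 LB]] := Diff_lip (DiffP p2 t1 t2).
have [Abt [Abt0 LBt]] := Diff_lip (DiffP (refl2 m n p2) t1 t2).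
move: LA LB LBt HD; rewrite -/al -/be.
set Btau := ev2 (refl2 m n p2) t1 t2 => LA LB LBt HD.
move=> c c0 eps eps0.
have [ce cr0] := pos_real c0; have [ee er0] := pos_real eps0.
set cr := complex.Re c in ce cr0; set er := complex.Re eps in ee er0.
set na := nm al; set nb := nm be; set nL := nm Btau.
have nL0 : 0 <= nL := nm_ge0 _.
set C1 := 2 * (Abt * na + nL * Aa) / na ^+ 2.
have C1E : C1 * na ^+ 2 = 2 * (Abt * na + nL * Aa).
  by rewrite /C1 divfK // expf_neq0 // lt0r_neq0.
have C10 : 0 <= C1.
  by rewrite /C1; apply: divr_ge0; [have := mulr_ge0 Abt0 (ltW na0); have := mulr_ge0 nL0 Aa0; lra | apply: exprn_ge0; lra].
set C2 := 8 * cr * KD / (na * nb).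
have C2E : C2 * (na * nb) = 8 * cr * KD.
  by rewrite /C2 divfK // mulf_neq0 // lt0r_neq0.
have C20 : 0 <= C2.
  rewrite /C2; apply: divr_ge0; last by apply: mulr_ge0; lra.
  by apply: mulr_ge0 => //; apply: mulr_ge0 => //; lra.
set delta := Num.min (1/4) (Num.min (na / (4 * (Aa + 1)))
   (Num.min (nb / (4 * (Ab + 1))) (er / (2 * (C1 + C2 + 1))))).
have d0 : 0 < delta.
  rewrite /delta !lt_min; apply/and4P; split; first lra.
  - by apply: divr_gt0 => //; lra.
  - by apply: divr_gt0 => //; lra.
  - by apply: divr_gt0 => //; lra.
exists (real_complex R delta); split; first by rewrite ltcR.
move=> z1 z2 z3 hz1 hz2 hz3 /= Hnt Hdel.
move: hz1 hz2 hz3; rewrite !nm_lt1 => hz1 hz2 hz3.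
have nt := Hnt; have dl := Hdel.
have Hc1 : `|z1 - t1| <= c * (1 - `|z3|) by apply: nt; rewrite !inE eqxx ?orbT.
have Hc2 : `|z2 - t2| <= c * (1 - `|z3|) by apply: nt; rewrite !inE eqxx ?orbT.
have Hd1 : `|z1 - t1| < real_complex R delta by apply: dl; rewrite !inE eqxx ?orbT.
have Hd2 : `|z2 - t2| < real_complex R delta by apply: dl; rewrite !inE eqxx ?orbT.
move: Hc1 Hc2 Hd1 Hd2; rewrite !normE ce !ltcR.
rewrite -[1 : R[i]](rmorph1 (real_complex R)) -!rmorphB -!rmorphM !lecR.
set h1 := z1 - t1; set h2 := z2 - t2 => Hc1 Hc2 Hd1 Hd2.
have ez1 : z1 = t1 + h1 by rewrite /h1; ring.
have ez2 : z2 = t2 + h2 by rewrite /h2; ring.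
clearbody h1 h2; subst z1 z2.
clear Hnt Hdel nt dl.
rewrite ee ltcR ep ept.
move: Hd1 Hd2; rewrite /delta !lt_min => /and4P[d11 d12 d13 d14] /and4P[d21 d22 d23 d24].
have nh1 := nm_ge0 h1; have nh2 := nm_ge0 h2.
have n1 : nm h1 <= 1/2 by lra.
have n2 : nm h2 <= 1/2 by lra.
have n1' : nm h1 <= 1 by lra.
have n2' : nm h2 <= 1 by lra.
have lA := LA h1 h2 n1' n2'; have lB := LB h1 h2 n1' n2'; have lBt := LBt h1 h2 n1' n2'.
have nD := HD h1 h2 n1 n2.
have BA := Hin _ _ hz1 hz2.
have P0 := zf' _ _ _ hz1 hz2 hz3.
move: lA lB lBt nD BA P0.
set A := ev2 p1 (t1 + h1) (t2 + h2); set B := ev2 p2 (t1 + h1) (t2 + h2).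
set At := ev2 (refl2 m n p1) (t1 + h1) (t2 + h2); set Bt := ev2 (refl2 m n p2) (t1 + h1) (t2 + h2).
set s := nm h1 + nm h2 => lA lB lBt nD BA P0.
have sdef : s = nm h1 + nm h2 by [].
have nadef : na = nm al by [].
have nbdef : nb = nm be by [].
have nLdef : nL = nm Btau by [].
clearbody A B At Bt al be Btau s na nb nL C1 C2 cr er.
clear - sdef nadef nbdef nLdef lA lB lBt nD BA P0 al0 na0 nb0 C1E C2E C10 C20 KD0 Aa0 Ab0 Abt0 cr0 er0 nL0 hz3 Hc1 Hc2
  d11 d12 d13 d14 d21 d22 d23 d24 nh1 nh2 n1 n2.
rewrite -nadef in na0; rewrite -nbdef in nb0.
have s0 : 0 <= s by rewrite sdef; lra.
have Aa1 : 0 < 4 * (Aa + 1) by lra.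
have Ab1 : 0 < 4 * (Ab + 1) by lra.
have Ce1 : 0 < 2 * (C1 + C2 + 1) by lra.
move: d12 d22 d13 d23 d14 d24; rewrite !ltr_pdivlMr // => d12 d22 d13 d23 d14 d24.
have sA : Aa * s <= na / 2 by rewrite sdef; lra.
have sB : Ab * s <= nb / 2 by rewrite sdef; lra.
have sE : s * (C1 + C2 + 1) < er by rewrite sdef; lra.
have nAlow : na / 2 <= nm A.
  have := nmD A (- (A - al)); rewrite nmN; have -> : A + - (A - al) = al by ring.
  rewrite -nadef; lra.
have nBlow : nb / 2 <= nm B.
  have := nmD B (- (B - be)); rewrite nmN; have -> : B + - (B - be) = be by ring.
  rewrite -nbdef; lra.
have nApos : 0 < nm A by lra.
have A0 : A != 0 by rewrite -nm_eq0; apply/eqP => e; move: nApos; rewrite e; lra.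
have nz3 := nm_ge0 z3.
have nPlow : nm B * (1 - nm z3) <= nm (A + B * z3).
  have := nmD (A + B * z3) (- (B * z3)); rewrite nmN nmM.
  have -> : A + B * z3 + - (B * z3) = A by ring.
  lra.
have sc : s <= 2 * cr * (1 - nm z3) by rewrite sdef; lra.
have -> : (Bt + At * z3) / (A + B * z3) - Btau / al =
   (Bt * al - Btau * A) / (A * al) + z3 * (At * A - Bt * B) / (A * (A + B * z3)).
  by field; rewrite A0 al0 P0.
apply: le_lt_trans (nmD _ _) _.
have T1 : nm ((Bt * al - Btau * A) / (A * al)) <= C1 * s.
  have pos : 0 < nm A * na by apply: mulr_gt0.
  rewrite nmM nmV nmM -nadef (ler_pdivrMr _ _ pos).
  have -> : Bt * al - Btau * A = (Bt - Btau) * al - Btau * (A - al) by ring.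
  apply: le_trans (nmD _ _) _; rewrite nmN !nmM -nadef -nLdef.
  have h1' := ler_wpM2r (ltW na0) lBt.
  have h2' := ler_wpM2l nL0 lA.
  have h3 : C1 * s * (na / 2 * na) <= C1 * s * (nm A * na).
    apply: ler_wpM2l; first by apply: mulr_ge0.
    by apply: ler_wpM2r; lra.
  have h4 : C1 * s * (na / 2 * na) = s * (Abt * na + nL * Aa).
    have -> : C1 * s * (na / 2 * na) = s * (C1 * na ^+ 2) / 2 by rewrite expr2; field.
    by rewrite C1E; field.
  lra.
have T2 : nm (z3 * (At * A - Bt * B) / (A * (A + B * z3))) <= C2 * s.
  have pos : 0 < nm A * nm (A + B * z3).
    by apply: mulr_gt0 => //; rewrite lt_def nm_eq0 P0 nm_ge0.
  rewrite nmM nmV !nmM (ler_pdivrMr _ _ pos).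
  set nP := nm (A + B * z3) in nPlow *.
  have h1' : nm z3 * nm (At * A - Bt * B) <= KD * s ^+ 2.
    apply: le_trans nD; rewrite -[X in _ <= X]mul1r; apply: ler_wpM2r; [exact: nm_ge0 | lra].
  have h2' : nb / 2 * (1 - nm z3) <= nP.
    apply: le_trans nPlow; apply: ler_wpM2r; lra.
  have h3 : C2 * s * (na / 2 * (nb / 2 * (1 - nm z3))) <= C2 * s * (nm A * nP).
    apply: ler_wpM2l; first by apply: mulr_ge0.
    apply: ler_pM => //; [lra | apply: mulr_ge0; lra].
  have h4 : C2 * s * (na / 2 * (nb / 2 * (1 - nm z3))) = 2 * cr * KD * s * (1 - nm z3).
    have -> : C2 * s * (na / 2 * (nb / 2 * (1 - nm z3))) = s * (1 - nm z3) * (C2 * (na * nb)) / 4 by field.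
    by rewrite C2E; field.
  have h5 : KD * s ^+ 2 <= 2 * cr * KD * s * (1 - nm z3).
    have := ler_wpM2l (mulr_ge0 KD0 s0) sc; rewrite expr2; lra.
  lra.
have := mulr_ge0 C10 s0; have := mulr_ge0 C20 s0.
lra.
Qed.
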